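(* Let $0<r_1<r_2<r_3$ satisfy \[ r_2(r_3-r_1)^3 - r_1(r_3+r_2)^3 - r_3(r_1+r_2)^3 \ \ge\ 0, \] and let $(i,j)\in\{(1,2),(2,3)\}$. For $\beta\in[0,\pi]$ let $\alpha(\beta)$ be the smallest solution $\alpha\in[\pi,2\pi]$ of $g_{13}(\beta)+g_{ij}(\alpha)=0$ (so $\alpha(0)=\alpha(\pi)=\pi$). Set \[\kappa=\frac{g_{13}'(0)}{-g_{ij}'(\pi)}=\frac{r_1r_3\,(r_i+r_j)^3}{r_ir_j\,(r_3-r_1)^3}.\] Then for every $\beta\in(0,\pi)$, \[ \pi\le\alpha(\beta)<\pi+\kappa\beta .\]
   Context: For $i,j\in\{1,2,3\}$ and $\theta\in\mathbb R$ set $D_{ij}(\theta)=r_i^2+r_j^2-2r_ir_j\cos\theta$ and $g_{ij}(\theta)=\dfrac{r_ir_j\sin\theta}{D_{ij}(\theta)^{3/2}}$. (By the comparison $g_{13}\le g_{ij}$ on $[0,\pi]$, the equation defining $\alpha(\beta)$ has a solution in $[\pi,2\pi]$, and $\kappa$ equals the derivative of $\alpha$ at $0$.) *)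

(* Defs.v *)
From Stdlib Require Import Reals.
Open Scope R_scope.

Definition Dfun (a b theta : R) : R := a ^ 2 + b ^ 2 - 2 * a * b * cos theta.

Definition gfun (a b theta : R) : R :=
  a * b * sin theta / Rpower (Dfun a b theta) (3 / 2).

Definition is_alpha (r1 r3 ri rj beta alpha : R) : Prop :=
  PI <= alpha <= 2 * PI /\
  gfun r1 r3 beta + gfun ri rj alpha = 0 /\
  (forall a, PI <= a < alpha -> gfun r1 r3 beta + gfun ri rj a <> 0).

(* kappa = g13'(0) / (- gij'(pi)) in closed form *)
Definition kappa (r1 r3 ri rj : R) : R :=
  r1 * r3 * (ri + rj) ^ 3 / (ri * rj * (r3 - r1) ^ 3).

(* Main.v *)
Require Import Defs.
From Stdlib Require Import Reals Lra Psatz.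
Open Scope R_scope.

Lemma pow32 x : 0 < x -> Rpower x (3/2) = x * sqrt x.
Proof.
  intro Hx. replace (3/2) with (1 + /2) by field.
  rewrite Rpower_plus, Rpower_1, Rpower_sqrt; auto.
Qed.

Lemma xsqrt_le x y : 0 < x -> x <= y -> x * sqrt x <= y * sqrt y.
Proof.
  intros Hx Hxy. assert (sqrt x <= sqrt y) by (apply sqrt_le_1; lra).
  assert (0 <= sqrt x) by apply sqrt_pos. nra.
Qed.

Lemma xsqrt_lt x y : 0 < x -> x < y -> x * sqrt x < y * sqrt y.
Proof.
  intros Hx Hxy. assert (sqrt x < sqrt y) by (apply sqrt_lt_1; lra).
  assert (0 <= sqrt x) by apply sqrt_pos. nra.
Qed.

Lemma sq_sqrt r : 0 <= r -> r ^ 2 * sqrt (r ^ 2) = r ^ 3.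
Proof. intro. rewrite sqrt_pow2 by assumption; ring. Qed.

Lemma D_pos a b t : 0 < a -> 0 < b -> a <> b -> 0 < Dfun a b t.
Proof.
  intros. unfold Dfun. pose proof (COS_bound t).
  assert (0 < (a-b)^2). { assert (a - b <> 0) by lra. nra. }
  assert (0 <= a*b*(1 - cos t)) by (apply Rmult_le_pos; nra). nra.
Qed.

Lemma sin_ineq k b : 0 < k <= 1 -> 0 <= b <= PI -> k * sin b <= sin (k * b).
Proof.
  intros Hk Hb. destruct (Req_dec b 0) as [->|Hb0].
  { rewrite Rmult_0_r, sin_0. lra. }
  set (phi := fun x => sin (k * x) - k * sin x).
  assert (H := MVT_cor2 phi (fun x => k * cos (k*x) - k * cos x) 0 b ltac:(lra)).
  destruct H as [c [Hc1 Hc2]].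
  { intros c Hc. unfold phi. apply derivable_pt_lim_minus.
    - replace (k * cos (k*c)) with (cos (k*c) * (k * 1)) by ring.
      apply (derivable_pt_lim_comp (fun x => k * x) sin).
      + apply derivable_pt_lim_scal. apply derivable_pt_lim_id.
      + apply derivable_pt_lim_sin.
    - apply derivable_pt_lim_scal. apply derivable_pt_lim_sin. }
  unfold phi in Hc1. rewrite Rmult_0_r, sin_0 in Hc1.
  assert (cos c <= cos (k*c)).
  { apply cos_decr_1; nra. }
  assert (0 <= (k * cos (k*c) - k * cos c) * (b - 0)) by (apply Rmult_le_pos; nra). lra.
Qed.
Lemma cont_eps f x : continuity_pt f x -> forall eps, 0 < eps ->
  exists d, 0 < d /\ forall y, Rabs (y - x) < d -> Rabs (f y - f x) < eps.
Proof.
  intros Hc eps He. destruct (Hc eps He) as [d [Hd Hd2]].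
  exists d. split; auto. intros y Hy.
  destruct (Req_dec y x) as [->|Hne].
  - unfold Rminus. rewrite Rplus_opp_r, Rabs_R0. auto.
  - apply (Hd2 y). split. { split. exact I. auto. } exact Hy.
Qed.

Lemma first_zero (f : R -> R) a b : a < b -> (forall x, continuity_pt f x) ->
  f a > 0 -> f b < 0 ->
  exists z, a < z < b /\ f z = 0 /\ (forall y, a <= y < z -> f y <> 0).
Proof.
  intros Hab Hc Ha Hb.
  set (E := fun x => a <= x <= b /\ forall y, a <= y <= x -> f y > 0).
  assert (HB : bound E). { exists b. intros x [Hx _]. lra. }
  assert (HE : exists x, E x). { exists a. split. lra. intros y Hy. replace y with a by lra. auto. }
  destruct (completeness E HB HE) as [z [Hub Hlub]].
  assert (Hza : a <= z). { apply Hub. destruct HE. unfold E. split. lra. intros y Hy. replace y with a by lra. auto. }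
  assert (Hzb : z <= b). { apply Hlub. intros x [Hx _]. lra. }
  assert (Hbelow : forall y, a <= y < z -> f y > 0).
  { intros y Hy. destruct (Rle_dec (f y) 0) as [Hn|Hp]; [|lra].
    exfalso. assert (is_upper_bound E y).
    { intros x [Hx Hx2]. destruct (Rle_dec x y); auto.
      assert (f y > 0) by (apply Hx2; lra). lra. }
    assert (z <= y) by (apply Hlub; auto). lra. }
  assert (Hfz : f z = 0).
  { destruct (Rtotal_order (f z) 0) as [Hlt|[Heq|Hgt]]; auto; exfalso.
    - assert (a < z). { destruct (Req_dec a z) as [<-|]; lra. }
      destruct (cont_eps f z (Hc z) (- f z) ltac:(lra)) as [d [Hd Hd2]].
      set (y := Rmax a (z - d/2)).
      assert (a <= y) by apply Rmax_l.
      assert (y < z) by (apply Rmax_lub_lt; lra).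
      assert (Hyz : Rabs (y - z) < d).
      { rewrite Rabs_left by lra. assert (z - d/2 <= y) by apply Rmax_r. lra. }
      specialize (Hd2 y Hyz). assert (f y > 0) by (apply Hbelow; lra).
      apply Rabs_def2 in Hd2. lra.
    - assert (z < b). { destruct (Req_dec z b) as [->|]; lra. }
      destruct (cont_eps f z (Hc z) (f z) ltac:(lra)) as [d [Hd Hd2]].
      set (x := Rmin b (z + d/2)).
      assert (x <= b) by apply Rmin_l.
      assert (z < x) by (apply Rmin_glb_lt; lra).
      assert (x <= z + d/2) by apply Rmin_r.
      assert (E x).
      { split. lra. intros y Hy. destruct (Rlt_dec y z). apply Hbelow; lra.
        assert (Hyz : Rabs (y - z) < d) by (rewrite Rabs_right; lra).
        specialize (Hd2 y Hyz). apply Rabs_def2 in Hd2. lra. }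
      assert (x <= z) by (apply Hub; auto). lra. }
  exists z. split; [split|split].
  - destruct (Req_dec a z) as [<-|]; lra.
  - destruct (Req_dec z b) as [->|]; lra.
  - exact Hfz.
  - intros y Hy. specialize (Hbelow y Hy). lra.
Qed.

Lemma Dfun_cont a b x : continuity_pt (Dfun a b) x.
Proof.
  unfold Dfun.
  apply continuity_pt_minus. apply continuity_pt_const. intros u v; reflexivity.
  apply continuity_pt_mult. apply continuity_pt_const. intros u v; reflexivity.
  apply continuity_cos.
Qed.

Lemma gfun_cont a b x : 0 < a -> 0 < b -> a <> b -> continuity_pt (gfun a b) x.
Proof.
  intros Ha Hb Hab.
  apply (continuity_pt_locally_ext
    (fun t => a * b * sin t / (Dfun a b t * sqrt (Dfun a b t))) _ 1 x ltac:(lra)).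
  { intros y _. unfold gfun. rewrite pow32; auto. apply D_pos; auto. }
  pose proof (D_pos a b x Ha Hb Hab) as HD.
  apply (continuity_pt_div (fun t => a * b * sin t) (fun t => Dfun a b t * sqrt (Dfun a b t))).
  - apply continuity_pt_mult. apply continuity_pt_const. intros u v; reflexivity.
    apply continuity_sin.
  - apply continuity_pt_mult. apply Dfun_cont.
    apply (continuity_pt_comp (Dfun a b) sqrt). apply Dfun_cont.
    apply sqrt_continuity_pt. auto.
  - assert (0 < sqrt (Dfun a b x)) by (apply sqrt_lt_R0; auto). nra.
Qed.

Lemma main_gen r1 r3 ri rj beta : 0 < r1 -> r1 < r3 -> 0 < ri -> ri < rj ->
  kappa r1 r3 ri rj <= 1 -> 0 < beta < PI ->
    (exists alpha, is_alpha r1 r3 ri rj beta alpha) /\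
    (forall alpha, is_alpha r1 r3 ri rj beta alpha ->
       PI <= alpha < PI + kappa r1 r3 ri rj * beta).
Proof.
  intros H1 H13 Hi Hij HK Hb.
  set (K := kappa r1 r3 ri rj) in *.
  assert (Hc3 : 0 < (r3 - r1)^3) by (apply pow_lt; lra).
  assert (Hc : 0 < (ri + rj)^3) by (apply pow_lt; lra).
  assert (HKeq : K * (ri * rj * (r3 - r1)^3) = r1 * r3 * (ri + rj)^3).
  { unfold K, kappa. field. split; lra. }
  assert (HK0 : 0 < K).
  { assert (0 < ri * rj * (r3 - r1)^3) by (apply Rmult_lt_0_compat; nra).
    assert (0 < r1 * r3 * (ri + rj)^3) by (apply Rmult_lt_0_compat; nra).
    nra. }
  set (t := K * beta).
  assert (Ht : 0 < t < PI) by (unfold t; split; nra).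
  assert (Hsb : 0 < sin beta) by (apply sin_gt_0; lra).
  assert (Hst : K * sin beta <= sin t) by (apply sin_ineq; lra).
  set (F := fun a => gfun r1 r3 beta + gfun ri rj a).
  assert (D13 : (r3 - r1)^2 < Dfun r1 r3 beta).
  { unfold Dfun. assert (cos beta < cos 0) by (apply cos_decreasing_1; lra).
    rewrite cos_0 in H. assert (0 < r1 * r3 * (1 - cos beta)) by (apply Rmult_lt_0_compat; nra).
    nra. }
  assert (Hpos13 : 0 < Dfun r1 r3 beta) by (apply D_pos; lra).
  assert (HA : (r3 - r1)^3 < Dfun r1 r3 beta * sqrt (Dfun r1 r3 beta)).
  { rewrite <- sq_sqrt by lra. apply xsqrt_lt; auto. apply pow_lt; lra. }
  assert (HFPI : F PI > 0).
  { unfold F, gfun. rewrite sin_PI. rewrite (pow32 (Dfun r1 r3 beta)) by auto.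
    rewrite (pow32 (Dfun ri rj PI)) by (apply D_pos; lra).
    assert (0 < Dfun ri rj PI) by (apply D_pos; lra).
    assert (0 < Dfun ri rj PI * sqrt (Dfun ri rj PI)) by (apply Rmult_lt_0_compat; [lra| apply sqrt_lt_R0; lra]).
    unfold Rdiv. rewrite Rmult_0_r, Rmult_0_l, Rplus_0_r.
    apply Rmult_lt_0_compat. apply Rmult_lt_0_compat; nra.
    apply Rinv_0_lt_compat. nra. }
  assert (HFb : F (PI + t) < 0).
  { unfold F, gfun. rewrite (Rplus_comm PI t).
    assert (Hposij : 0 < Dfun ri rj (t + PI)) by (apply D_pos; lra).
    rewrite (pow32 (Dfun r1 r3 beta)) by auto. rewrite (pow32 (Dfun ri rj (t+PI))) by auto. rewrite neg_sin.
    set (A := Dfun r1 r3 beta * sqrt (Dfun r1 r3 beta)) in *.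
    assert (HDij : Dfun ri rj (t + PI) <= (ri + rj)^2).
    { unfold Dfun. rewrite neg_cos. pose proof (COS_bound t). assert (0 <= ri*rj*(1 - cos t)) by (apply Rmult_le_pos; nra). nra. }
    set (B := Dfun ri rj (t + PI) * sqrt (Dfun ri rj (t + PI))).
    assert (HB0 : 0 < B) by (apply Rmult_lt_0_compat; [lra| apply sqrt_lt_R0; lra]).
    assert (HBc : B <= (ri + rj)^3).
    { unfold B. rewrite <- sq_sqrt by lra. apply xsqrt_le; auto. }
    set (x := r1 * r3 * sin beta). set (y := ri * rj * sin t).
    assert (Hx : 0 < x) by (unfold x; apply Rmult_lt_0_compat; nra).
    assert (Hst0 : 0 < sin t) by nra.
    assert (Hy : 0 < y) by (unfold y; apply Rmult_lt_0_compat; nra).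
    assert (S1 : x * B <= x * (ri + rj)^3) by (apply Rmult_le_compat_l; lra).
    assert (S2 : x * (ri + rj)^3 = K * sin beta * (ri * rj * (r3 - r1)^3)).
    { unfold x. replace (K * sin beta * (ri * rj * (r3 - r1) ^ 3)) with (sin beta * (K * (ri * rj * (r3 - r1) ^ 3))) by ring. rewrite HKeq. ring. }
    assert (S3 : K * sin beta * (ri * rj * (r3 - r1)^3) <= sin t * (ri * rj * (r3 - r1)^3)).
    { apply Rmult_le_compat_r; auto. apply Rlt_le, Rmult_lt_0_compat; nra. }
    assert (S4 : y * (r3 - r1)^3 < y * A) by (apply Rmult_lt_compat_l; auto).
    assert (Hkey : x * B < y * A).
    { assert (sin t * (ri * rj * (r3 - r1)^3) = y * (r3 - r1)^3) by (unfold y; ring). lra. }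
    assert (HA0 : 0 < A) by lra.
    replace (ri * rj * - sin t / B) with (- (y / B)) by (unfold y, Rdiv; ring).
    assert (E : x / A - y / B = (x * B - y * A) * / (A * B)) by (field; lra).
    assert (0 < / (A * B)) by (apply Rinv_0_lt_compat; nra).
    assert ((x * B - y * A) * / (A * B) < 0) by nra.
    unfold Rminus in E. lra. }
  destruct (first_zero F PI (PI + t) ltac:(lra)) as [z [Hz [Hfz Hmin]]]; auto.
  { intro u. unfold F. apply continuity_pt_plus. apply continuity_pt_const. intros p q; reflexivity.
    apply gfun_cont; lra. }
  split.
  - exists z. split; [lra|]. split; [exact Hfz|]. exact Hmin.
  - intros alpha [Ha [Ha2 Ha3]]. split; [lra|].
    destruct (Rlt_dec alpha (PI + t)) as [|Hn]; [unfold t in *; lra|].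
    exfalso. apply (Ha3 z); [lra| exact Hfz].
Qed.

Lemma kappa_le r1 r3 ri rj : 0 < r1 -> r1 < r3 -> 0 < ri -> 0 < rj ->
  r1 * r3 * (ri + rj)^3 <= ri * rj * (r3 - r1)^3 -> kappa r1 r3 ri rj <= 1.
Proof.
  intros. unfold kappa.
  assert (0 < ri * rj * (r3 - r1)^3).
  { apply Rmult_lt_0_compat. nra. apply pow_lt; lra. }
  apply (Rmult_le_reg_r (ri * rj * (r3 - r1)^3)); auto.
  unfold Rdiv. rewrite Rmult_assoc, Rinv_l by lra. lra.
Qed.

Theorem lemma2p5 (r1 r2 r3 ri rj : R) :
  0 < r1 -> r1 < r2 -> r2 < r3 ->
  r2 * (r3 - r1) ^ 3 - r1 * (r3 + r2) ^ 3 - r3 * (r1 + r2) ^ 3 >= 0 ->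
  ((ri, rj) = (r1, r2) \/ (ri, rj) = (r2, r3)) ->
  forall beta, 0 < beta < PI ->
    (exists alpha, is_alpha r1 r3 ri rj beta alpha) /\
    (forall alpha, is_alpha r1 r3 ri rj beta alpha ->
       PI <= alpha < PI + kappa r1 r3 ri rj * beta).
Proof.
  intros H1 H12 H23 Hc Hcase beta Hb.
  assert (P1 : 0 <= r1 * (r3 + r2)^3) by (apply Rmult_le_pos; [lra| apply pow_le; lra]).
  assert (P2 : 0 <= r3 * (r1 + r2)^3) by (apply Rmult_le_pos; [lra| apply pow_le; lra]).
  destruct Hcase as [He|He]; injection He as -> ->.
  - apply main_gen; try lra. apply kappa_le; try lra.
    replace (r1 * r3 * (r1 + r2)^3) with (r1 * (r3 * (r1 + r2)^3)) by ring.
    replace (r1 * r2 * (r3 - r1)^3) with (r1 * (r2 * (r3 - r1)^3)) by ring.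
    apply Rmult_le_compat_l; lra.
  - apply main_gen; try lra. apply kappa_le; try lra.
    replace (r1 * r3 * (r2 + r3)^3) with (r3 * (r1 * (r3 + r2)^3)) by ring.
    replace (r2 * r3 * (r3 - r1)^3) with (r3 * (r2 * (r3 - r1)^3)) by ring.
    apply Rmult_le_compat_l; lra.
Qed.
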